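(* Let $\mathcal{L}$ be a family of oriented balanced algebraic laws over a signature $\Sigma$, let $\phi$ be an injective endomorphism of the geometry group $G_{\mathcal{L}}$, and let $\mathtt{Cc}:T_\Sigma(x)\to G_{\mathcal{L}}$ be a $\phi$-blueprint for $\mathcal{L}$. Then for all words $w,w'\in\mathcal{W}_{\mathcal{L}}$, if $\mathit{eval}(w)\sim\mathit{eval}(w')$ then $\mathtt{eval}(w)=\mathtt{eval}(w')$ in $G_{\mathcal{L}}$.
   Context: $T_\Sigma(x)$: terms in the single variable $x$ over $\Sigma$ (general terms use an infinite set of variables). A law is balanced if both sides contain the same variables. Addresses are finite sequences of positive integers, $t/\alpha$ the subterm at $\alpha$. For $L=(l,r)\in\mathcal{L}$ and an address $\alpha$, $O^+_{L,\alpha}$ is the partial map sending $t$ with $t/\alpha=l\sigma$ to the term obtained by replacing that subterm by $r\sigma$; $O^-_{L,\alpha}$ is its inverse. $\mathcal{W}_{\mathcal{L}}$ is the free monoid on the letters $O^{\pm}_{L,\alpha}$; $\mathit{eval}(w)$ is the partial map on terms obtained by applying the letters of $w$ left to right; $t\cdot f$ is the image of $t$ under $f$. For partial maps $f,g$ on terms, $f\sim g$ means there is at least one term $u$ on which both are defined and $u\cdot f=u\cdot g$. The geometry group $G_{\mathcal{L}}$ is the group presented by generators $g_{L,\alpha}$ and a set of relations $u=v$ between positive words (in the letters $O^+_{L,\alpha}$) that hold as equalities of partial maps (the confluence relations); $\mathtt{eval}:\mathcal{W}_{\mathcal{L}}\to G_{\mathcal{L}}$ sends $O^+_{L,\alpha}\mapsto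 g_{L,\alpha}$, $O^-_{L,\alpha}\mapsto g_{L,\alpha}^{-1}$. $\mathtt{Cc}$ is a $\phi$-blueprint if $\mathtt{Cc}(t\cdot\mathit{eval}(w))=\mathtt{Cc}(t)\cdot\phi(\mathtt{eval}(w))$ for all $t\in T_\Sigma(x)$ and $w\in\mathcal{W}_{\mathcal{L}}$ with $t\cdot\mathit{eval}(w)$ defined. *)

(* Defs.v *)
From mathcomp Require Import all_boot.
Set Implicit Arguments. Unset Strict Implicit. Unset Printing Implicit Defensive.

Section Geometry.

Variable F : Type.
Variable ar : F -> nat.

(** Raw terms over [F] with variables indexed by [nat]; the variable [x] of
    [T_Sigma(x)] is [Var 0]. *)
Inductive term : Type :=
| Var : nat -> term
| App : F -> seq term -> term.

Inductive wf : term -> Prop :=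
| wf_var v : wf (Var v)
| wf_app f ts : size ts = ar f ->
    (forall i, i < size ts -> wf (nth (Var 0) ts i)) -> wf (App f ts).

Inductive occurs (v : nat) : term -> Prop :=
| occ_var : occurs v (Var v)
| occ_app f ts i : i < size ts -> occurs v (nth (Var 0) ts i) -> occurs v (App f ts).

Definition in_Tx (t : term) : Prop := wf t /\ (forall v, occurs v t -> v = 0).

Fixpoint subst (s : nat -> term) (t : term) : term :=
  match t with
  | Var v => s v
  | App f ts => App f (map (subst s) ts)
  end.

Definition address := seq BinNums.positive.

(** [rewr l r t a t']: [t/a = l s] for some substitution [s], and [t'] is
    [t] with that subterm replaced by [r s]. *)
Inductive rewr (l r : term) : term -> address -> term -> Prop :=
| rw_here s : rewr l r (subst s l) [::] (subst s r)
| rw_in f ts1 u u' ts2 p a :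
    nat_of_pos p = (size ts1).+1 ->
    rewr l r u a u' ->
    rewr l r (App f (ts1 ++ u :: ts2)) (p :: a) (App f (ts1 ++ u' :: ts2)).

Variable I : Type.
Variable law : I -> term * term.

Definition balanced (L : term * term) : Prop :=
  forall v, occurs v L.1 <-> occurs v L.2.

(** Generators [g_{L,alpha}] and letters [O^{+-}_{L,alpha}] (true = +). *)
Definition gen := (I * address)%type.
Definition letter := (bool * gen)%type.

(** The partial map [O^+_{L,alpha}] (as its graph). *)
Definition opP (g : gen) (t t' : term) : Prop :=
  rewr (law g.1).1 (law g.1).2 t g.2 t'.

Definition letter_rel (a : letter) (t t' : term) : Prop :=
  if a.1 then opP a.2 t t' else opP a.2 t' t.

(** [eval w] (graph of the partial map, letters applied left to right). *)
Fixpoint evalrel (w : seq letter) : term -> term -> Prop :=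
  match w with
  | [::] => fun t s => t = s
  | a :: w' => fun t s => exists m, letter_rel a t m /\ evalrel w' m s
  end.

Definition sim (w w' : seq letter) : Prop :=
  exists u s, wf u /\ evalrel w u s /\ evalrel w' u s.

Definition pos_word (u : seq gen) : seq letter := map (pair true) u.

Definition valid_relations (R : seq gen -> seq gen -> Prop) : Prop :=
  forall u v, R u v ->
    forall t, wf t -> forall s, evalrel (pos_word u) t s <-> evalrel (pos_word v) t s.

(** The geometry group [G_L]: words over the generators and their inverses
    modulo the congruence generated by free cancellation and the relations [R].
    Elements of [G_L] are represented by such words ([gword]); equality in
    [G_L] is [gcong R]. *)
Definition gword := seq letter.
Definition ginv (a : letter) : letter := (~~ a.1, a.2).

Inductive gcong (R : seq gen -> seq gen -> Prop) : gword -> gword -> Prop :=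
| gc_refl u : gcong R u u
| gc_sym u v : gcong R u v -> gcong R v u
| gc_trans u v w : gcong R u v -> gcong R v w -> gcong R u w
| gc_free u v a : gcong R (u ++ a :: ginv a :: v) (u ++ v)
| gc_rel u v a b : R a b -> gcong R (u ++ pos_word a ++ v) (u ++ pos_word b ++ v).

(** [eval : W_L -> G_L], [O^+ |-> g], [O^- |-> g^-1]: the word itself,
    read as a representative in [G_L]. *)
Definition geval (w : seq letter) : gword := w.

(** [phi] (on representatives) induces an injective endomorphism of [G_L]. *)
Definition injective_endo (R : seq gen -> seq gen -> Prop) (phi : gword -> gword) : Prop :=
  [/\ (forall u v, gcong R u v -> gcong R (phi u) (phi v)),
      (forall u v, gcong R (phi (u ++ v)) (phi u ++ phi v)) &
      (forall u v, gcong R (phi u) (phi v) -> gcong R u v)].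

Definition blueprint (R : seq gen -> seq gen -> Prop) (phi : gword -> gword)
  (Cc : term -> gword) : Prop :=
  forall t, in_Tx t -> forall (w : seq letter) s, evalrel w t s ->
    gcong R (Cc s) (Cc t ++ phi (geval w)).

End Geometry.

(* Main.v *)
Require Import Defs.
From mathcomp Require Import all_boot.

Section Aux.
Variable F : Type.

Fixpoint subst_comp (sg s : nat -> term F) (t : term F) {struct t} :
  subst sg (subst s t) = subst (fun v => subst sg (s v)) t :=
  match t return subst sg (subst s t) = subst (fun v => subst sg (s v)) t with
  | Var v => erefl
  | App f ts => f_equal (App f)
      ((fix go (ts : seq (term F)) :
          map (subst sg) (map (subst s) ts) = map (subst (fun v => subst sg (s v))) ts :=
        match ts with
        | [::] => erefl
        | t :: ts => f_equal2 cons (subst_comp sg s t) (go ts)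
        end) ts)
  end.

Lemma rewr_subst (l r : term F) t a t' sg :
  rewr l r t a t' -> rewr l r (subst sg t) a (subst sg t').
Proof.
elim=> [s|f ts1 u u' ts2 p a' Hp _ IH].
  rewrite !subst_comp; exact: rw_here.
rewrite /= !map_cat /=; apply: rw_in => //; by rewrite size_map.
Qed.
End Aux.

Section Grp.
Variable I : Type.
Variable R : seq (gen I) -> seq (gen I) -> Prop.

Lemma gcong_catl x u v : gcong R u v -> gcong R (x ++ u) (x ++ v).
Proof.
elim=> {u v} [u|u v _ IH|u v w _ IH1 _ IH2|u v a|u v a b Hab].
- exact: gc_refl.
- exact: gc_sym.
- exact: gc_trans IH2.
- rewrite !catA; exact: gc_free.
- rewrite !catA -(catA _ (pos_word a)) -(catA _ (pos_word b)); exact: gc_rel.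
Qed.

Definition winv (x : gword I) := rev (map (@ginv I) x).

Lemma ginvK (a : letter I) : ginv (ginv a) = a.
Proof. by case: a => b g; rewrite /ginv /= negbK. Qed.

Lemma winv_cancel x u : gcong R (winv x ++ x ++ u) u.
Proof.
elim: x => [|a x IH] /=; first exact: gc_refl.
rewrite /winv /= rev_cons -cats1 -catA /=.
apply: gc_trans IH.
have := gc_free R (rev (map (@ginv I) x)) (x ++ u) (ginv a).
by rewrite ginvK.
Qed.
End Grp.

Theorem proposition4p8 (F : Type) (ar : F -> nat) (I : Type)
  (law : I -> term F * term F)
  (Hlaws_wf : forall i, wf ar (law i).1 /\ wf ar (law i).2)
  (Hbalanced : forall i, balanced (law i))
  (R : seq (gen I) -> seq (gen I) -> Prop)
  (HR : valid_relations ar law R)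
  (phi : gword I -> gword I) (Hphi : injective_endo R phi)
  (Cc : term F -> gword I) (HCc : blueprint ar law R phi Cc)
  (w w' : seq (letter I)) :
  sim ar law w w' -> gcong R (geval w) (geval w').
Proof.
case=> u [s [Hu [Hw Hw']]].
set sg := fun _ : nat => Var F 0.
have Hev : forall w0 t t', evalrel law w0 t t' -> evalrel law w0 (subst sg t) (subst sg t').
  elim=> [|a w0 IH] t t' /=; first by move->.
  case=> m [Ha Hm]; exists (subst sg m); split; last exact: IH.
  move: Ha; rewrite /letter_rel /opP; case: a.1 => Ha; exact: rewr_subst.
have Hin : in_Tx ar (subst sg u).
  split.
    elim: Hu => [v|f ts Hs _ IH] /=; first exact: wf_var.
    apply: wf_app; first by rewrite size_map.
    move=> i; rewrite size_map => Hi; rewrite (nth_map (Var F 0)) //; exact: IH.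
  move=> v Ho.
  have: forall t', occurs v t' -> forall u, t' = subst sg u -> v = 0.
    move=> t'; elim=> [|f ts i Hi _ IH] [n|g us] //=.
    - by case.
    - case=> _ Ets; move: Hi IH; rewrite Ets size_map => Hi IH.
      apply: (IH (nth (Var F 0) us i)); by rewrite (nth_map (Var F 0)).
  by move/(_ _ Ho u erefl).
have H1 := HCc _ Hin _ _ (Hev _ _ _ Hw).
have H2 := HCc _ Hin _ _ (Hev _ _ _ Hw').
have H3 : gcong R (Cc (subst sg u) ++ phi (geval w)) (Cc (subst sg u) ++ phi (geval w')).
  apply: gc_trans (gc_sym H1) H2.
have H4 := @gcong_catl I R (@winv I (Cc (subst sg u))) _ _ H3.
have H5 : gcong R (phi (geval w)) (phi (geval w')).
  apply: gc_trans (gc_sym (winv_cancel _ _ _ _)) _.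
  apply: gc_trans H4 _; exact: winv_cancel.
case: Hphi => _ _ Hinj; exact: Hinj.
Qed.
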